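(* Let $\hat\theta\in[0,\frac{\pi}{2}]$ and $1<\alpha\le 2$. Then $$\sin(\alpha\hat\theta)\ge\sin(\hat\theta)\cos^{\alpha-1}(\hat\theta),$$ where equality holds if and only if $\hat\theta=0$ in the case $1<\alpha<2$, and if and only if $\hat\theta=0$ or $\hat\theta=\frac{\pi}{2}$ in the case $\alpha=2$. *)

(* Defs.v *)
From Stdlib Require Import Reals.
Open Scope R_scope.

(* Real power x^y for x >= 0 and y > 0, with the convention 0^y = 0.
   (Stdlib's Rpower 0 y = exp (y * ln 0) is not the intended value.) *)
Definition rpow (x y : R) : R :=
  if Req_EM_T x 0 then 0 else Rpower x y.

(* Main.v *)
From Stdlib Require Import Reals Lra.
Require Import Defs.
From Coquelicot Require Import Coquelicot.
Open Scope R_scope.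

Lemma jordan (s x : R) : 0 <= s <= 1 -> 0 <= x <= PI/2 -> s * sin x <= sin (s * x).
Proof.
  intros Hs Hx.
  destruct (Req_dec x 0) as [->|Hx0].
  { rewrite Rmult_0_r, sin_0; lra. }
  destruct (MVT_cor2 (fun t => sin (s*t) - s * sin t) (fun t => s * cos (s*t) - s * cos t) 0 x)
    as [c [Hc1 Hc2]]; [lra| |].
  { intros c _. apply is_derive_Reals. auto_derive; [easy|ring]. }
  rewrite !Rmult_0_r, sin_0 in Hc1.
  assert (cos c <= cos (s*c)).
  { destruct (Req_dec s 1) as [->|Hs1]. { rewrite Rmult_1_l; lra. }
    left. apply cos_decreasing_1; pose proof PI_RGT_0; nra. }
  assert (0 <= (s * cos (s * c) - s * cos c) * (x - 0)) by (apply Rmult_le_pos; nra).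
  lra.
Qed.

Lemma bern (c s : R) : 0 < c <= 1 -> 0 <= s <= 1 -> Rpower c s <= 1 - s + s * c.
Proof.
  intros Hc Hs.
  destruct (Req_dec c 1) as [->|Hc1].
  { unfold Rpower. rewrite ln_1, Rmult_0_r, exp_0. lra. }
  destruct (MVT_cor2 (fun t => 1 - s + s * t - Rpower t s) (fun t => s - s * Rpower t (s-1)) c 1)
    as [d [Hd1 Hd2]]; [lra| |].
  { intros d Hd. apply is_derive_Reals. apply (is_derive_minus (fun t => 1 - s + s * t) (fun t => Rpower t s) d s (s * Rpower d (s-1))).
    - auto_derive; [easy|ring].
    - apply is_derive_Reals. apply derivable_pt_lim_power. lra. }
  assert (1 <= Rpower d (s-1)).
  { unfold Rpower. pose proof (exp_ineq1_le ((s - 1) * ln d)).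
    assert (ln d < 0) by (rewrite <- ln_1; apply ln_increasing; lra). nra. }
  assert (E1 : Rpower 1 s = 1) by (unfold Rpower; rewrite ln_1, Rmult_0_r, exp_0; lra).
  rewrite E1 in Hd1.
  assert ((s - s * Rpower d (s - 1)) * (1 - c) <= 0).
  { apply Rmult_le_0_r; nra. }
  lra.
Qed.

Lemma ptolemy (a b c : R) : sin (c - b) * sin a = sin (a - b) * sin c + sin (c - a) * sin b.
Proof. rewrite !sin_minus. ring. Qed.

Lemma interior (theta alpha : R) : 0 < theta < PI/2 -> 1 < alpha <= 2 ->
  sin (alpha * theta) > sin theta * Defs.rpow (cos theta) (alpha - 1).
Proof.
  intros Ht Ha.
  pose proof PI_RGT_0.
  assert (Hs : 0 < sin theta) by (apply sin_gt_0; lra).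
  assert (Hc : 0 < cos theta) by (apply cos_gt_0; lra).
  assert (Hc1 : cos theta < 1).
  { rewrite <- cos_0. apply cos_decreasing_1; lra. }
  unfold Defs.rpow. destruct (Req_EM_T (cos theta) 0) as [E|_]; [lra|].
  pose proof (bern (cos theta) (alpha - 1) ltac:(lra) ltac:(lra)) as B.
  pose proof (ptolemy (alpha*theta) theta (2*theta)) as P.
  replace (2*theta - theta) with theta in P by ring.
  replace (alpha*theta - theta) with ((alpha-1)*theta) in P by ring.
  replace (2*theta - alpha*theta) with ((2-alpha)*theta) in P by ring.
  pose proof (jordan (alpha-1) theta ltac:(lra) ltac:(lra)) as J1.
  pose proof (jordan (2-alpha) theta ltac:(lra) ltac:(lra)) as J2.
  rewrite sin_2a in P.
  assert (H2 : sin theta * sin (alpha*theta) >= sin theta * ((alpha-1) * (2 * sin theta * cos theta) + (2-alpha) * sin theta)).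
  { rewrite P. assert (0 <= 2 * sin theta * cos theta) by nra. nra. }
  assert (H3 : sin (alpha*theta) >= (alpha-1) * (2 * sin theta * cos theta) + (2-alpha) * sin theta).
  { apply Rle_ge. apply (Rmult_le_reg_l (sin theta)); lra. }
  assert (sin theta * Rpower (cos theta) (alpha - 1) <= sin theta * (1 - (alpha-1) + (alpha-1) * cos theta)) by nra.
  assert (0 < (alpha - 1) * (sin theta * cos theta)) by (apply Rmult_lt_0_compat; nra).
  nra.
Qed.

Theorem lemma2 (theta alpha : R)
  (Htheta : 0 <= theta <= PI / 2) (Halpha : 1 < alpha <= 2) :
  sin (alpha * theta) >= sin theta * rpow (cos theta) (alpha - 1) /\
  (alpha < 2 ->
     (sin (alpha * theta) = sin theta * rpow (cos theta) (alpha - 1)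
      <-> theta = 0)) /\
  (alpha = 2 ->
     (sin (alpha * theta) = sin theta * rpow (cos theta) (alpha - 1)
      <-> theta = 0 \/ theta = PI / 2)).
Proof.
  pose proof PI_RGT_0.
  assert (Z : theta = 0 -> sin (alpha * theta) = sin theta * rpow (cos theta) (alpha - 1)).
  { intros ->. rewrite Rmult_0_r, sin_0. ring. }
  assert (Hpi : theta = PI/2 -> sin theta * rpow (cos theta) (alpha - 1) = 0).
  { intros ->. rewrite cos_PI2. unfold rpow. destruct (Req_EM_T 0 0); [ring|lra]. }
  assert (P1 : theta = PI/2 -> alpha < 2 -> sin (alpha * theta) > 0).
  { intros -> Ha. apply sin_gt_0; nra. }
  assert (P2 : theta = PI/2 -> alpha = 2 -> sin (alpha * theta) = 0).
  { intros -> ->. replace (2 * (PI/2)) with PI by field. apply sin_PI. }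
  assert (I : 0 < theta < PI/2 -> sin (alpha * theta) > sin theta * rpow (cos theta) (alpha - 1)).
  { intros; now apply interior. }
  destruct (Req_dec theta 0) as [E0|N0].
  { specialize (Z E0). split; [lra|]. split; intros; split; intros; auto; lra. }
  destruct (Req_dec theta (PI/2)) as [Ep|Np].
  { specialize (Hpi Ep). split.
    - destruct (Req_dec alpha 2) as [A|A].
      + specialize (P2 Ep A); lra.
      + assert (alpha < 2) by lra. specialize (P1 Ep H0); lra.
    - split; intros; split; intros.
      + specialize (P1 Ep H0); lra.
      + lra.
      + auto.
      + specialize (P2 Ep H0); lra. }
  assert (0 < theta < PI/2) by lra. specialize (I H0).
  split; [lra|]. split; intros; split; intros; lra.
Qed.
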